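(* Assume the standing setting below with $I\ge 2$ and fix arbitrary parameters $0<\beta\le 1$, $\lambda\ge 1$, $0<\mu\le 1$. (i) (High reference point $R_p=0$.) The supremum of $U(b,\cdot)$ over $[0,\infty)$ is attained, and it is attained at some point of the finite set $\{d_i-Q:\ i=\hat\imath+1,\ldots,I\}\cup\{0\}$; i.e. an optimal buying quantity is $$q_b^*=\arg\max_{q_b\in\{d_i-Q,\ i=\hat\imath+1,\ldots,I\}\cup\{0\}} U(b,q_b).$$ (ii) (Low reference point $R_p=\kappa(Q-d_I)$.) Let $\mathcal X_b$ be the set of points $q_b>0$ at which $U(b,\cdot)$ (computed with $R_p=\kappa(Q-d_I)$) is differentiable with $\partial U(b,q_b)/\partial q_b=0$. Then the supremum of $U(b,\cdot)$ over $[0,\infty)$ is attained at some point of $\{d_i-Q:\ i=\hat\imath+1,\ldots,I\}\cup\mathcal X_b\cup\{0\}$; i.e. $$q_b^*=\arg\max_{q_b\in\{d_i-Q,\ i=\hat\imath+1,\ldots,I\}\cup\mathcal X_b\cup\{0\}} U(b,q_b).$$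
   Context: Standing setting. Let $\kappa>0$ and $Q>0$. The future demand $d$ takes values $d_1<d_2<\cdots<d_I$ ($I\ge2$) with $\mathbb P(d=d_i)=p_i>0$, $\sum_i p_i=1$, and $d_1<Q<d_I$; let $\hat\imath$ be the index with $d_{\hat\imath}<Q\le d_{\hat\imath+1}$. The satisfaction loss is $L(y)=0$ if $y\ge0$ and $L(y)=\kappa y$ if $y<0$. For parameters $0<\beta\le1$, $\lambda\ge1$, the value function is $v(x)=x^\beta$ for $x\ge0$ and $v(x)=-\lambda(-x)^\beta$ for $x<0$. For $0<\mu\le1$ the probability weighting is $w(p)=\exp(-(-\ln p)^\mu)$ for $p\in(0,1]$. Prices satisfy $0<\pi_s^{\min}<\kappa$ and $0<\pi_b^{\max}<\kappa$. For a reference point $R_p\in\mathbb R$, the buyer's utility of buying $q_b\ge0$ is $U(b,q_b)=\sum_{i=1}^I w(p_i)\,v\big(-\pi_s^{\min}q_b+L(Q+q_b-d_i)-R_p\big)$ and the seller's utility of selling $q_s\ge0$ is $U(s,q_s)=\sum_{i=1}^I w(p_i)\,v\big(\pi_b^{\max}q_s+L(Q-q_s-d_i)-R_p\big)$. *)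

(* Defs.v *)
From Stdlib Require Import Reals Lra List.
Open Scope R_scope.

(* Real power x^b for x >= 0, with the convention 0^b = 0 (b > 0).
   (Stdlib's Rpower 0 b = exp (b * ln 0) = 1, so we special-case 0.) *)
Definition pw (x b : R) : R :=
  if Rlt_dec 0 x then Rpower x b else 0.

Definition Lsat (kappa y : R) : R :=
  if Rle_dec 0 y then 0 else kappa * y.

Definition vfun (beta lambda x : R) : R :=
  if Rle_dec 0 x then pw x beta else - lambda * pw (- x) beta.

Definition wfun (mu p : R) : R := exp (- pw (- ln p) mu).

Definition sumI (n : nat) (f : nat -> R) : R :=
  fold_right Rplus 0 (map f (seq 0 n)).

(* Buyer's utility U(b, q_b); demand values d 0 < ... < d (I-1),
   probabilities p 0, ..., p (I-1) (0-based indexing). *)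
Definition Ubuy (kappa Q : R) (I : nat) (d p : nat -> R)
  (beta lambda mu pis Rp : R) (qb : R) : R :=
  sumI I (fun i => wfun mu (p i) *
     vfun beta lambda (- pis * qb + Lsat kappa (Q + qb - d i) - Rp)).

(* Main.v *)
Require Import Defs.
From Stdlib Require Import Reals Lra Lia List FunctionalExtensionality.
Open Scope R_scope.

Lemma ln_le_sub1 y : 0 < y -> ln y <= y - 1.
Proof. intro H. pose proof (exp_ineq1_le (ln y)). rewrite exp_ln in H0; lra. Qed.

Lemma Rpower_tangent s b : 0 < s -> 0 < b <= 1 -> Rpower s b <= 1 + b * (s - 1).
Proof.
  intros Hs Hb. set (m := b * s + (1 - b)).
  assert (Hm : 0 < m) by (unfold m; nra).
  assert (H1 : ln s - ln m <= s / m - 1).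
  { replace (ln s - ln m) with (ln (s * / m)) by
      (rewrite ln_mult, ln_Rinv by (try apply Rinv_0_lt_compat; lra); ring).
    apply ln_le_sub1. apply Rmult_lt_0_compat; [lra| apply Rinv_0_lt_compat; lra]. }
  assert (H2 : - ln m <= / m - 1).
  { rewrite <- ln_Rinv by lra. apply ln_le_sub1. apply Rinv_0_lt_compat; lra. }
  assert (H3 : b * ln s <= ln m).
  { assert (E : b * (s / m - 1) + (1 - b) * (/ m - 1) = 0).
    { unfold m. field. unfold m in Hm; lra. }
    assert (b * (ln s - ln m) <= b * (s/m - 1)) by (apply Rmult_le_compat_l; lra).
    assert ((1-b) * (- ln m) <= (1-b) * (/m - 1)) by (apply Rmult_le_compat_l; lra).
    nra. }
  unfold Rpower. replace (1 + b * (s - 1)) with m by (unfold m; ring).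
  rewrite <- (exp_ln m) by lra. destruct (Rle_lt_or_eq_dec _ _ H3) as [H4|H4]; [left; apply exp_increasing; exact H4| rewrite H4; lra].
Qed.

Lemma pw_pos x b : 0 < x -> pw x b = Rpower x b.
Proof. intro H; unfold pw; destruct (Rlt_dec 0 x); [reflexivity| lra]. Qed.
Lemma pw_nonpos x b : x <= 0 -> pw x b = 0.
Proof. intro H; unfold pw; destruct (Rlt_dec 0 x); [lra| reflexivity]. Qed.
Lemma pw_ge0 x b : 0 <= pw x b.
Proof. unfold pw; destruct (Rlt_dec 0 x); [unfold Rpower; left; apply exp_pos| lra]. Qed.
Lemma pw_gt0 x b : 0 < x -> 0 < pw x b.
Proof. intro; rewrite pw_pos by lra; unfold Rpower; apply exp_pos. Qed.

Lemma pw_tangent x z b : 0 <= x -> 0 < z -> 0 < b <= 1 ->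
  pw x b <= pw z b + (b * pw z b / z) * (x - z).
Proof.
  intros Hx Hz Hb. destruct (Rle_lt_or_eq_dec 0 x Hx) as [Hx'|Hx'].
  - rewrite !pw_pos by lra.
    replace x with ((x / z) * z) at 1 by (field; lra).
    rewrite <- Rpower_mult_distr by (try apply Rdiv_lt_0_compat; lra).
    pose proof (Rpower_tangent (x/z) b ltac:(apply Rdiv_lt_0_compat; lra) Hb).
    assert (0 < Rpower z b) by (unfold Rpower; apply exp_pos).
    replace (Rpower z b + b * Rpower z b / z * (x - z)) with
      ((1 + b * (x / z - 1)) * Rpower z b) by (field; lra).
    apply Rmult_le_compat_r; lra.
  - subst x. rewrite pw_nonpos by lra. pose proof (pw_gt0 z b Hz).
    replace (pw z b + b * pw z b / z * (0 - z)) with ((1 - b) * pw z b) by (field; lra).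
    apply Rmult_le_pos; lra.
Qed.

Lemma pw_concave u w t b : 0 <= u -> 0 <= w -> 0 <= t <= 1 -> 0 < b <= 1 ->
  t * pw u b + (1 - t) * pw w b <= pw (t * u + (1 - t) * w) b.
Proof.
  intros Hu Hw Ht Hb. set (z := t * u + (1 - t) * w).
  assert (Htu : 0 <= t * u) by (apply Rmult_le_pos; lra).
  assert (Htw : 0 <= (1 - t) * w) by (apply Rmult_le_pos; lra).
  destruct (Rle_lt_or_eq_dec 0 z ltac:(unfold z; lra)) as [Hz|Hz].
  - pose proof (pw_tangent u z b Hu Hz Hb). pose proof (pw_tangent w z b Hw Hz Hb).
    set (K := b * pw z b / z) in *.
    assert (t * pw u b <= t * (pw z b + K * (u - z))) by (apply Rmult_le_compat_l; lra).
    assert ((1-t) * pw w b <= (1-t) * (pw z b + K * (w - z))) by (apply Rmult_le_compat_l; lra).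
    assert (E : t * (pw z b + K * (u - z)) + (1-t) * (pw z b + K * (w - z)) = pw z b)
      by (unfold z; ring).
    lra.
  - assert (t * u = 0) by (unfold z in Hz; lra). assert ((1-t) * w = 0) by (unfold z in Hz; lra).
    rewrite <- Hz, (pw_nonpos 0) by lra.
    assert (A1 : t * pw u b = 0).
    { destruct (Rmult_integral _ _ H) as [E|E]; [rewrite E; ring| rewrite E, pw_nonpos by lra; ring]. }
    assert (A2 : (1 - t) * pw w b = 0).
    { destruct (Rmult_integral _ _ H0) as [E|E]; [rewrite E; ring| rewrite E, pw_nonpos by lra; ring]. }
    lra.
Qed.

Lemma foldsum_le (l : list nat) f g : (forall i, In i l -> f i <= g i) ->
  fold_right Rplus 0 (map f l) <= fold_right Rplus 0 (map g l).
Proof.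
  induction l as [|a l IH]; simpl; intros H; [lra|].
  pose proof (H a (or_introl eq_refl)). assert (fold_right Rplus 0 (map f l) <= fold_right Rplus 0 (map g l)) by (apply IH; auto). lra.
Qed.

Lemma sumI_le n f g : (forall i, (i < n)%nat -> f i <= g i) -> sumI n f <= sumI n g.
Proof.
  intros H. unfold sumI. apply foldsum_le. intros i Hi. apply in_seq in Hi. apply H. lia.
Qed.

Lemma sumI_lin n f g x y :
  sumI n (fun i => x * f i + y * g i) = x * sumI n f + y * sumI n g.
Proof.
  unfold sumI. induction (seq 0 n) as [|a l IH]; simpl; [ring|]. rewrite IH. ring.
Qed.

Lemma vfun_eq b lam x : vfun b lam x = pw x b - lam * pw (- x) b.
Proof.
  unfold vfun. destruct (Rle_dec 0 x).
  - rewrite (pw_nonpos (-x)) by lra. ring.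
  - rewrite (pw_nonpos x) by lra. ring.
Qed.

Lemma pw_mono x y b : 0 < b -> x <= y -> pw x b <= pw y b.
Proof.
  intros Hb H. destruct (Rle_dec x 0).
  - rewrite (pw_nonpos x) by lra. apply pw_ge0.
  - rewrite !pw_pos by lra. apply Rle_Rpower_l; lra.
Qed.

Lemma vfun_mono b lam x y : 0 < b -> 0 <= lam -> x <= y -> vfun b lam x <= vfun b lam y.
Proof.
  intros Hb Hl H. rewrite !vfun_eq.
  pose proof (pw_mono x y b Hb H). pose proof (pw_mono (-y) (-x) b Hb ltac:(lra)).
  assert (lam * pw (-y) b <= lam * pw (-x) b) by (apply Rmult_le_compat_l; lra). lra.
Qed.

Lemma vfun_convex_neg b lam x y t : 0 < b <= 1 -> 0 <= lam -> x <= 0 -> y <= 0 -> 0 <= t <= 1 ->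
  vfun b lam (t * x + (1 - t) * y) <= t * vfun b lam x + (1 - t) * vfun b lam y.
Proof.
  intros Hb Hl Hx Hy Ht. rewrite !vfun_eq.
  assert (t * x + (1-t) * y <= 0) by nra.
  rewrite !(pw_nonpos (t * x + (1 - t) * y)), (pw_nonpos x), (pw_nonpos y) by lra.
  replace (- (t * x + (1 - t) * y)) with (t * (-x) + (1-t) * (-y)) by ring.
  pose proof (pw_concave (-x) (-y) t b ltac:(lra) ltac:(lra) Ht Hb).
  assert (lam * (t * pw (- x) b + (1 - t) * pw (- y) b) <= lam * pw (t * - x + (1 - t) * - y) b)
    by (apply Rmult_le_compat_l; lra).
  lra.
Qed.

Lemma Lsat_eq k y : Lsat k y = k * (y - Rabs y) / 2.
Proof.
  unfold Lsat. destruct (Rle_dec 0 y).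
  - rewrite Rabs_right by lra. field.
  - rewrite Rabs_left by lra. field.
Qed.
Lemma Lsat_ge k y : 0 <= y -> Lsat k y = 0.
Proof. intros; unfold Lsat; destruct (Rle_dec 0 y); lra. Qed.
Lemma Lsat_le k y : y <= 0 -> Lsat k y = k * y.
Proof. intros; unfold Lsat; destruct (Rle_dec 0 y); [assert (y = 0) by lra; subst; ring| reflexivity]. Qed.
Lemma Lsat_nonpos k y : 0 < k -> Lsat k y <= 0.
Proof. intros; unfold Lsat; destruct (Rle_dec 0 y); nra. Qed.
Lemma wfun_pos mu q : 0 < wfun mu q.
Proof. unfold wfun; apply exp_pos. Qed.

Lemma dlim_loc f g x l r : 0 < r -> (forall y, Rabs (y - x) < r -> f y = g y) ->
  derivable_pt_lim g x l -> derivable_pt_lim f x l.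
Proof.
  intros Hr Hfg Hg eps He. destruct (Hg eps He) as [del Hd].
  assert (Hm : 0 < Rmin del r) by (apply Rmin_pos; [apply cond_pos| lra]).
  exists (mkposreal _ Hm). simpl. intros h Hh Hhd.
  rewrite (Hfg (x + h)), (Hfg x).
  - apply Hd; auto. eapply Rlt_le_trans; [exact Hhd| apply Rmin_l].
  - replace (x - x) with 0 by ring. rewrite Rabs_R0; lra.
  - replace (x + h - x) with h by ring. eapply Rlt_le_trans; [exact Hhd| apply Rmin_r].
Qed.

Lemma pw_deriv x b : x <> 0 -> derivable_pt (fun y => pw y b) x.
Proof.
  intros Hx. destruct (Rlt_dec x 0) as [H|H].
  - exists 0. apply (dlim_loc _ (fun _ => 0) x 0 (- x)); [lra| |].
    + intros y Hy. apply pw_nonpos. apply Rabs_def2 in Hy. lra.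
    + apply derivable_pt_lim_const.
  - assert (0 < x) by lra. exists (b * Rpower x (b - 1)). apply (dlim_loc _ (fun y => Rpower y b) x _ x); [lra| |].
    + intros y Hy. apply pw_pos. apply Rabs_def2 in Hy. lra.
    + apply derivable_pt_lim_power; lra.
Qed.

Lemma pw_cont0 b : 0 < b -> continuity_pt (fun y => pw y b) 0.
Proof.
  intros Hb. unfold continuity_pt, continue_in, limit1_in, limit_in. simpl. unfold R_dist.
  intros eps He. exists (Rpower eps (/ b)). split; [unfold Rpower; apply exp_pos|].
  intros x [_ Hx]. rewrite (pw_nonpos 0) by lra. rewrite Rminus_0_r in *.
  rewrite Rabs_right by (apply Rle_ge, pw_ge0).
  destruct (Rle_dec x 0).
  - rewrite pw_nonpos by lra. lra.
  - rewrite pw_pos by lra. apply Rabs_def2 in Hx.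
    replace eps with (Rpower (Rpower eps (/ b)) b).
    + apply Rlt_Rpower_l; lra.
    + rewrite Rpower_mult. replace (/ b * b) with 1 by (field; lra). apply Rpower_1; lra.
Qed.

Lemma pw_cont b x : 0 < b -> continuity_pt (fun y => pw y b) x.
Proof.
  intros Hb. destruct (Req_dec x 0) as [->|H].
  - apply pw_cont0; auto.
  - apply derivable_continuous_pt, pw_deriv; auto.
Qed.

Lemma cont_comp (g h : R -> R) x : continuity_pt h x -> continuity_pt g (h x) ->
  continuity_pt (fun q => g (h q)) x.
Proof. intros; exact (continuity_pt_comp h g x H H0). Qed.
Lemma der_comp (g h : R -> R) x : derivable_pt h x -> derivable_pt g (h x) ->
  derivable_pt (fun q => g (h q)) x.
Proof. intros; exact (derivable_pt_comp h g x H H0). Qed.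

Lemma vfun_fun b lam : vfun b lam = fun x => pw x b - lam * pw (- x) b.
Proof. extensionality x; apply vfun_eq. Qed.

Lemma vfun_cont b lam x : 0 < b -> continuity_pt (vfun b lam) x.
Proof.
  intros Hb. rewrite vfun_fun.
  apply (continuity_pt_minus (fun x => pw x b) (fun x => lam * pw (-x) b)).
  - apply pw_cont; auto.
  - apply (continuity_pt_mult (fun _ => lam) (fun x => pw (-x) b)).
    + apply continuity_pt_const. intros ? ?; reflexivity.
    + apply (cont_comp (fun y => pw y b) Ropp). 
      * apply derivable_continuous_pt. reg.
      * apply pw_cont; auto.
Qed.

Lemma vfun_der b lam x : x <> 0 -> derivable_pt (vfun b lam) x.
Proof.
  intros Hx. rewrite vfun_fun.
  apply (derivable_pt_minus (fun x => pw x b) (fun x => lam * pw (-x) b)).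
  - apply pw_deriv; auto.
  - apply (derivable_pt_mult (fun _ => lam) (fun x => pw (-x) b)).
    + apply derivable_pt_const.
    + apply (der_comp (fun y => pw y b) Ropp).
      * reg.
      * apply pw_deriv; lra.
Qed.

Lemma Lsat_fun k : Lsat k = fun y => k * (y - Rabs y) / 2.
Proof. extensionality y; apply Lsat_eq. Qed.

Lemma Lsat_cont k x : continuity_pt (Lsat k) x.
Proof.
  rewrite Lsat_fun.
  apply (continuity_pt_mult (fun y => k * (y - Rabs y)) (fun _ => / 2)).
  - apply (continuity_pt_mult (fun _ => k) (fun y => y - Rabs y)).
    + apply continuity_pt_const; intros ? ?; reflexivity.
    + apply (continuity_pt_minus id Rabs). apply derivable_continuous_pt; reg. apply Rcontinuity_abs.
  - apply continuity_pt_const; intros ? ?; reflexivity.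
Qed.

Lemma Lsat_der k x : x <> 0 -> derivable_pt (Lsat k) x.
Proof.
  intros Hx. rewrite Lsat_fun.
  apply (derivable_pt_mult (fun y => k * (y - Rabs y)) (fun _ => / 2)).
  - apply (derivable_pt_mult (fun _ => k) (fun y => y - Rabs y)).
    + apply derivable_pt_const.
    + apply (derivable_pt_minus id Rabs). reg. apply Rderivable_pt_abs; auto.
  - apply derivable_pt_const.
Qed.

Lemma cont_sumI n (F : nat -> R -> R) x : (forall i, (i < n)%nat -> continuity_pt (F i) x) ->
  continuity_pt (fun q => sumI n (fun i => F i q)) x.
Proof.
  intros H. unfold sumI.
  assert (G : forall i, In i (seq 0 n) -> continuity_pt (F i) x)
    by (intros i Hi; apply in_seq in Hi; apply H; lia).
  clear H. induction (seq 0 n) as [|a l IH]; simpl.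
  - apply continuity_pt_const; intros ? ?; reflexivity.
  - apply (continuity_pt_plus (F a) (fun q => fold_right Rplus 0 (map (fun i => F i q) l))).
    + apply G; simpl; auto.
    + apply IH; intros; apply G; simpl; auto.
Qed.

Lemma der_sumI n (F : nat -> R -> R) x : (forall i, (i < n)%nat -> derivable_pt (F i) x) ->
  derivable_pt (fun q => sumI n (fun i => F i q)) x.
Proof.
  intros H. unfold sumI.
  assert (G : forall i, In i (seq 0 n) -> derivable_pt (F i) x)
    by (intros i Hi; apply in_seq in Hi; apply H; lia).
  clear H. induction (seq 0 n) as [|a l IH]; simpl.
  - apply derivable_pt_const.
  - apply (derivable_pt_plus (F a) (fun q => fold_right Rplus 0 (map (fun i => F i q) l))).
    + apply G; simpl; auto.
    + apply IH; intros; apply G; simpl; auto.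
Qed.

Lemma U_cont kappa Q I d p b lam mu pis Rp x : 0 < b ->
  continuity_pt (Ubuy kappa Q I d p b lam mu pis Rp) x.
Proof.
  intros Hb. unfold Ubuy.
  apply (cont_sumI I (fun i qb => wfun mu (p i) *
     vfun b lam (- pis * qb + Lsat kappa (Q + qb - d i) - Rp))).
  intros i _.
  apply (continuity_pt_mult (fun _ => wfun mu (p i))
     (fun qb => vfun b lam (- pis * qb + Lsat kappa (Q + qb - d i) - Rp))).
  - apply continuity_pt_const; intros ? ?; reflexivity.
  - apply (cont_comp (vfun b lam)); [| apply vfun_cont; auto].
    apply (continuity_pt_minus (fun qb => - pis * qb + Lsat kappa (Q + qb - d i)) (fun _ => Rp)).
    2: apply continuity_pt_const; intros ? ?; reflexivity.
    apply (continuity_pt_plus (fun qb => - pis * qb) (fun qb => Lsat kappa (Q + qb - d i))).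
    + apply derivable_continuous_pt; reg.
    + apply (cont_comp (Lsat kappa)); [apply derivable_continuous_pt; reg| apply Lsat_cont].
Qed.

Lemma U_der kappa Q I d p b lam mu pis Rp x :
  (forall i, (i < I)%nat -> - pis * x + Lsat kappa (Q + x - d i) - Rp <> 0 /\ Q + x - d i <> 0) ->
  derivable_pt (Ubuy kappa Q I d p b lam mu pis Rp) x.
Proof.
  intros H. unfold Ubuy.
  apply (der_sumI I (fun i qb => wfun mu (p i) *
     vfun b lam (- pis * qb + Lsat kappa (Q + qb - d i) - Rp))).
  intros i Hi. destruct (H i Hi) as [H1 H2].
  apply (derivable_pt_mult (fun _ => wfun mu (p i))
     (fun qb => vfun b lam (- pis * qb + Lsat kappa (Q + qb - d i) - Rp))).
  - apply derivable_pt_const.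
  - apply (der_comp (vfun b lam)); [| apply vfun_der; auto].
    apply (derivable_pt_minus (fun qb => - pis * qb + Lsat kappa (Q + qb - d i)) (fun _ => Rp)).
    2: apply derivable_pt_const.
    apply (derivable_pt_plus (fun qb => - pis * qb) (fun qb => Lsat kappa (Q + qb - d i))).
    + reg.
    + apply (der_comp (Lsat kappa)); [reg| apply Lsat_der; auto].
Qed.

Lemma U_tail kappa Q I d p b lam mu pis Rp B q : 0 < b -> 0 <= lam -> 0 <= pis ->
  (forall i, (i < I)%nat -> d i - Q <= B) -> B <= q ->
  Ubuy kappa Q I d p b lam mu pis Rp q <= Ubuy kappa Q I d p b lam mu pis Rp B.
Proof.
  intros Hb Hl Hp HB Hq. unfold Ubuy. apply sumI_le. intros i Hi.
  pose proof (HB i Hi). rewrite !Lsat_ge by lra.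
  apply Rmult_le_compat_l; [left; apply wfun_pos|]. apply vfun_mono; nra.
Qed.

Lemma U_conv kappa Q I d p b lam mu pis a b0 t :
  0 < kappa -> 0 < pis -> 0 < b <= 1 -> 0 <= lam -> 0 <= a <= b0 -> 0 <= t <= 1 ->
  (forall i, (i < I)%nat -> d i - Q <= a \/ b0 <= d i - Q) ->
  Ubuy kappa Q I d p b lam mu pis 0 (t * a + (1 - t) * b0) <=
  t * Ubuy kappa Q I d p b lam mu pis 0 a + (1 - t) * Ubuy kappa Q I d p b lam mu pis 0 b0.
Proof.
  intros Hk Hp Hb Hl Hab Ht Hnb. unfold Ubuy. rewrite <- sumI_lin. apply sumI_le.
  intros i Hi.
  set (x := - pis * a + Lsat kappa (Q + a - d i) - 0).
  set (y := - pis * b0 + Lsat kappa (Q + b0 - d i) - 0).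
  assert (E : - pis * (t * a + (1 - t) * b0) + Lsat kappa (Q + (t * a + (1 - t) * b0) - d i) - 0
              = t * x + (1 - t) * y).
  { unfold x, y. destruct (Hnb i Hi) as [H|H].
    - rewrite !Lsat_ge by nra. ring.
    - rewrite !Lsat_le by nra. ring. }
  rewrite E.
  assert (x <= 0) by (unfold x; pose proof (Lsat_nonpos kappa (Q + a - d i) Hk); nra).
  assert (y <= 0) by (unfold y; pose proof (Lsat_nonpos kappa (Q + b0 - d i) Hk); nra).
  pose proof (vfun_convex_neg b lam x y t Hb Hl H H0 Ht).
  pose proof (wfun_pos mu (p i)).
  replace (t * (wfun mu (p i) * vfun b lam x) + (1 - t) * (wfun mu (p i) * vfun b lam y))
    with (wfun mu (p i) * (t * vfun b lam x + (1 - t) * vfun b lam y)) by ring.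
  apply Rmult_le_compat_l; lra.
Qed.

Lemma piece_i kappa Q I d p b lam mu pis a b0 :
  0 < kappa -> 0 < pis -> 0 < b <= 1 -> 0 <= lam -> 0 <= a <= b0 ->
  (forall i, (i < I)%nat -> d i - Q <= a \/ b0 <= d i - Q) ->
  exists c, (c = a \/ c = b0) /\ forall q, a <= q <= b0 ->
     Ubuy kappa Q I d p b lam mu pis 0 q <= Ubuy kappa Q I d p b lam mu pis 0 c.
Proof.
  intros Hk Hp Hb Hl Hab Hnb.
  set (U := Ubuy kappa Q I d p b lam mu pis 0).
  assert (M : forall q, a <= q <= b0 -> U q <= Rmax (U a) (U b0)).
  { intros q Hq. destruct (Req_dec a b0) as [E|E].
    - assert (q = a) by lra. subst q. apply Rmax_l.
    - set (t := (b0 - q) / (b0 - a)).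
      assert (Ht : 0 <= t <= 1).
      { unfold t; split.
        + unfold Rdiv; apply Rmult_le_pos; [lra| left; apply Rinv_0_lt_compat; lra].
        + apply (Rmult_le_reg_r (b0 - a)); [lra|]. unfold Rdiv. rewrite Rmult_assoc, Rinv_l by lra. lra. }
      replace q with (t * a + (1 - t) * b0) by (unfold t; field; lra).
      eapply Rle_trans; [apply U_conv; eauto|].
      pose proof (Rmax_l (U a) (U b0)). pose proof (Rmax_r (U a) (U b0)).
      fold U. nra. }
  destruct (Rle_dec (U a) (U b0)).
  - exists b0. split; [auto|]. intros q Hq. specialize (M q Hq). rewrite Rmax_right in M; auto.
  - exists a. split; [auto|]. intros q Hq. specialize (M q Hq). rewrite Rmax_left in M; lra.
Qed.

Lemma piece_ii kappa Q I d p b lam mu pis D a b0 :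
  0 < kappa -> 0 < pis < kappa -> 0 < b <= 1 ->
  (forall i, (i < I)%nat -> d i <= D) -> 0 <= a <= b0 -> b0 <= D - Q ->
  (forall i, (i < I)%nat -> d i - Q <= a \/ b0 <= d i - Q) ->
  exists c, (c = a \/ c = b0 \/
      (0 < c /\ derivable_pt_lim (Ubuy kappa Q I d p b lam mu pis (kappa * (Q - D))) c 0))
   /\ forall q, a <= q <= b0 ->
     Ubuy kappa Q I d p b lam mu pis (kappa * (Q - D)) q <=
     Ubuy kappa Q I d p b lam mu pis (kappa * (Q - D)) c.
Proof.
  intros Hk Hp Hb HD Hab HbD Hnb.
  set (U := Ubuy kappa Q I d p b lam mu pis (kappa * (Q - D))).
  destruct (continuity_ab_maj U a b0 ltac:(lra)) as [Mx [HM HMx]].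
  { intros c _. apply U_cont; lra. }
  exists Mx. split; [|exact HM].
  destruct (Req_dec Mx a) as [E|E]; [left; exact E|].
  destruct (Req_dec Mx b0) as [E'|E']; [right; left; exact E'|].
  right; right. split; [lra|].
  assert (Hder : forall i, (i < I)%nat ->
    - pis * Mx + Lsat kappa (Q + Mx - d i) - kappa * (Q - D) <> 0 /\ Q + Mx - d i <> 0).
  { intros i Hi. pose proof (HD i Hi) as HDi. destruct (Hnb i Hi) as [H|H].
    - rewrite Lsat_ge by lra. split; nra.
    - rewrite Lsat_le by lra. split; nra. }
  destruct (U_der kappa Q I d p b lam mu pis (kappa * (Q - D)) Mx Hder) as [l Hl].
  pose proof (deriv_maximum U a b0 Mx (exist _ l Hl) ltac:(lra) ltac:(lra)) as Hz.
  simpl in Hz. rewrite Hz in Hl; [exact Hl|].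
  intros x H1 H2. apply HM; lra.
Qed.

Lemma assemble (U : R -> R) (good : R -> Prop) (B : nat -> R) n :
  0 <= B n ->
  (exists c, good c /\ forall q, 0 <= q <= B 0%nat -> U q <= U c) ->
  (forall k, (k < n)%nat -> exists c, good c /\ forall q, B k <= q <= B (S k) -> U q <= U c) ->
  (forall q, B n <= q -> U q <= U (B n)) ->
  exists qs, good qs /\ forall q, 0 <= q -> U q <= U qs.
Proof.
  intros HBn H0 Hk Ht.
  assert (G : forall k, (k <= n)%nat -> exists c, good c /\ forall q, 0 <= q <= B k -> U q <= U c).
  { induction k as [|k IH]; intros Hkn; [exact H0|].
    destruct (IH ltac:(lia)) as [c1 [G1 H1]]. destruct (Hk k ltac:(lia)) as [c2 [G2 H2]].
    destruct (Rle_dec (U c1) (U c2)).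
    - exists c2; split; auto. intros q Hq. destruct (Rle_dec q (B k)).
      + specialize (H1 q ltac:(lra)); lra.
      + apply H2; lra.
    - exists c1; split; auto. intros q Hq. destruct (Rle_dec q (B k)).
      + apply H1; lra.
      + specialize (H2 q ltac:(lra)); lra. }
  destruct (G n (le_n _)) as [c [Gc Hc]]. exists c; split; auto.
  intros q Hq. destruct (Rle_dec q (B n)).
  - apply Hc; lra.
  - specialize (Ht q ltac:(lra)). specialize (Hc (B n) ltac:(lra)). lra.
Qed.

Theorem theorem1
  (kappa Q : R) (I : nat) (d p : nat -> R) (ihat : nat)
  (beta lambda mu pis : R)
  (Hkappa : 0 < kappa) (HQ : 0 < Q) (HI : (2 <= I)%nat)
  (Hd_incr : forall i j, (i < j)%nat -> (j < I)%nat -> d i < d j)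
  (Hp_pos : forall i, (i < I)%nat -> 0 < p i)
  (Hp_sum : sumI I p = 1)
  (HQ1 : d 0%nat < Q) (HQI : Q < d (I - 1)%nat)
  (Hihat_lt : (ihat + 1 < I)%nat)
  (Hihat : d ihat < Q <= d (ihat + 1)%nat)
  (Hbeta : 0 < beta <= 1) (Hlambda : 1 <= lambda) (Hmu : 0 < mu <= 1)
  (Hpis : 0 < pis < kappa) :
  (* (i) high reference point R_p = 0 *)
  (exists qs : R,
      ((exists i, (ihat < i < I)%nat /\ qs = d i - Q) \/ qs = 0) /\
      forall qb : R, 0 <= qb ->
        Ubuy kappa Q I d p beta lambda mu pis 0 qb
        <= Ubuy kappa Q I d p beta lambda mu pis 0 qs)
  /\
  (* (ii) low reference point R_p = kappa (Q - d_I) *)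
  (exists qs : R,
      ((exists i, (ihat < i < I)%nat /\ qs = d i - Q)
       \/ (0 < qs /\
           derivable_pt_lim
             (Ubuy kappa Q I d p beta lambda mu pis (kappa * (Q - d (I - 1)%nat)))
             qs 0)
       \/ qs = 0) /\
      forall qb : R, 0 <= qb ->
        Ubuy kappa Q I d p beta lambda mu pis (kappa * (Q - d (I - 1)%nat)) qb
        <= Ubuy kappa Q I d p beta lambda mu pis (kappa * (Q - d (I - 1)%nat)) qs).
Proof.
  assert (dle : forall i j, (i <= j)%nat -> (j < I)%nat -> d i <= d j).
  { intros i j Hij Hj. destruct (Nat.eq_dec i j) as [->|Hne]; [lra|].
    left; apply Hd_incr; lia. }
  set (B := fun k : nat => d (ihat + 1 + k)%nat - Q).
  set (n := (I - 2 - ihat)%nat).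
  assert (HBn : B n = d (I - 1)%nat - Q).
  { unfold B, n. replace (ihat + 1 + (I - 2 - ihat))%nat with (I - 1)%nat by lia. reflexivity. }
  assert (HB0 : 0 <= B n) by lra.
  assert (Hall : forall i, (i < I)%nat -> d i - Q <= B n).
  { intros i Hi. rewrite HBn. pose proof (dle i (I-1)%nat ltac:(lia) ltac:(lia)). lra. }
  assert (Hnb0 : forall i, (i < I)%nat -> d i - Q <= 0 \/ B 0%nat <= d i - Q).
  { intros i Hi. unfold B. rewrite Nat.add_0_r. destruct (Nat.le_gt_cases i ihat).
    - left. pose proof (dle i ihat ltac:(lia) ltac:(lia)). lra.
    - right. pose proof (dle (ihat+1)%nat i ltac:(lia) ltac:(lia)). lra. }
  assert (HBk : forall k, (k <= n)%nat -> Q <= d (ihat + 1 + k)%nat /\ B k <= B n).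
  { intros k Hk. unfold n in Hk. split.
    - pose proof (dle (ihat+1)%nat (ihat + 1 + k)%nat ltac:(lia) ltac:(lia)). lra.
    - rewrite HBn. unfold B. pose proof (dle (ihat + 1 + k)%nat (I-1)%nat ltac:(lia) ltac:(lia)). lra. }
  assert (Hnbk : forall k, (k < n)%nat -> forall i, (i < I)%nat -> d i - Q <= B k \/ B (S k) <= d i - Q).
  { intros k Hk i Hi. unfold B, n in *. destruct (Nat.le_gt_cases i (ihat + 1 + k)%nat).
    - left. pose proof (dle i (ihat + 1 + k)%nat ltac:(lia) ltac:(lia)). lra.
    - right. pose proof (dle (ihat + 1 + S k)%nat i ltac:(lia) ltac:(lia)). lra. }
  assert (HBmono : forall k, (k < n)%nat -> B k <= B (S k)).
  { intros k Hk. unfold B, n in *. pose proof (dle (ihat + 1 + k)%nat (ihat + 1 + S k)%nat ltac:(lia) ltac:(lia)). lra. }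
  assert (Hgoodk : forall k, (k <= n)%nat -> exists i, (ihat < i < I)%nat /\ B k = d i - Q).
  { intros k Hk. exists (ihat + 1 + k)%nat. unfold n in Hk. split; [lia| reflexivity]. }
  split.
  - apply (assemble _ _ B n HB0).
    + destruct (piece_i kappa Q I d p beta lambda mu pis 0 (B 0%nat)) as [c [Hc Hc']];
        try lra; auto.
      * pose proof (HBk 0%nat ltac:(lia)). unfold B in *. rewrite Nat.add_0_r in *. lra.
      * exists c. split; [|exact Hc']. destruct Hc as [->| ->]; [right; auto| left; apply Hgoodk; lia].
    + intros k Hk. destruct (piece_i kappa Q I d p beta lambda mu pis (B k) (B (S k))) as [c [Hc Hc']];
        try lra; auto.
      * pose proof (HBk k ltac:(lia)). pose proof (HBmono k Hk). unfold B in *. lra.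
      * exists c. split; [|exact Hc']. left. destruct Hc as [->| ->]; apply Hgoodk; lia.
    + intros q Hq. apply U_tail; auto; lra.
  - apply (assemble _ _ B n HB0).
    + destruct (piece_ii kappa Q I d p beta lambda mu pis (d (I-1)%nat) 0 (B 0%nat)) as [c [Hc Hc']];
        try lra; auto.
      * intros i Hi. apply dle; lia.
      * pose proof (HBk 0%nat ltac:(lia)). unfold B in *. rewrite Nat.add_0_r in *. lra.
      * pose proof (HBk 0%nat ltac:(lia)). lra.
      * exists c. split; [|exact Hc']. destruct Hc as [->|[->|Hc]].
        -- right; right; auto.
        -- left; apply Hgoodk; lia.
        -- right; left; exact Hc.
    + intros k Hk. destruct (piece_ii kappa Q I d p beta lambda mu pis (d (I-1)%nat) (B k) (B (S k))) as [c [Hc Hc']];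
        try lra; auto.
      * intros i Hi. apply dle; lia.
      * pose proof (HBk k ltac:(lia)). pose proof (HBmono k Hk). unfold B in *. lra.
      * pose proof (HBk (S k) ltac:(lia)). lra.
      * exists c. split; [|exact Hc']. destruct Hc as [->|[->|Hc]].
        -- left; apply Hgoodk; lia.
        -- left; apply Hgoodk; lia.
        -- right; left; exact Hc.
    + intros q Hq. apply U_tail; auto; lra.
Qed.
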